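(* Let $n$ views be given, view $i$ containing $m_i$ items, and let $l=\sum_{i=1}^n m_i$. Let $\tilde P\in\{0,1\}^{l\times l}$ be a noisy aggregate association matrix (block $(i,j)$ is $\tilde P^i_j\in\{0,1\}^{m_i\times m_j}$, with $\tilde P^i_i=I$), let $\tilde C$ be the diagonal matrix whose $k$-th diagonal entry is the $k$-th row sum of $\tilde P$, let $\tilde L=\tilde C-\tilde P$, $\tilde P_{\mathrm{nrm}}=\tilde C^{-1/2}\tilde P\tilde C^{-1/2}$ and $\tilde L_{\mathrm{nrm}}=\tilde C^{-1/2}\tilde L\tilde C^{-1/2}$. Consider Problem 1: $$\max_{P^i_j\in\mathbb P}\ \langle P_{\mathrm{nrm}},\tilde P_{\mathrm{nrm}}\rangle\quad\text{subject to } P=VV^\top,\ V\in\mathbb V,$$ where $P$ is the aggregate matrix with blocks $P^i_j$, $C$ is the diagonal matrix of row sums of $P$, and $P_{\mathrm{nrm}}=C^{-1/2}PC^{-1/2}$. Then Problem 1 is equivalent to the program $$\min_{U\in\mathbb U}\ \mathrm{tr}\big(U^\top\tilde L_{\mathrm{nrm}}U\big),$$ where $\mathbb U=\{U: U=C^{-1/2}V,\ V\in\mathbb V\}$ (with $C$ the diagonal row-sum matrix of $VV^\top$), in the sense that $V$ is optimal for Problem 1 if and only if $U=C^{-1/2}V$ is optimal for the latter program; moreover every $U\in\mathbb U$ satisfies $U^\top U=I$.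
   Context: A partial permutation matrix is a $0/1$ matrix in which each row and each column contains at most one entry equal to $1$; $\mathbb P$ denotes the set of all such matrices. A lifting permutation matrix $P^i\in\{0,1\}^{m_i\times m}$ is a $0/1$ matrix each of whose rows contains exactly one entry equal to $1$ and each of whose columns contains at most one entry equal to $1$. $\mathbb V$ is the set of matrices $V=[P^{1\top}\ P^{2\top}\ \cdots\ P^{n\top}]^\top\in\{0,1\}^{l\times m}$ with each $P^i$ a lifting permutation matrix, where $m$ (the size of the universe) is the number of distinct items, so that every column of $V$ contains at least one entry equal to $1$. $\langle A,B\rangle=\mathrm{tr}(A^\top B)$ is the Frobenius inner product. *)

(* Defs.v *)
From HB Require Import structures.
From mathcomp Require Import all_boot all_order all_algebra.
Set Implicit Arguments. Unset Strict Implicit. Unset Printing Implicit Defensive.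
Import Order.TTheory GRing.Theory Num.Theory.
Local Open Scope ring_scope.

Section Defs.
Variable R : rcfType.

Definition is01 (x : R) : bool := (x == 0) || (x == 1).

Definition partial_perm_mx (p q : nat) (A : 'M[R]_(p, q)) : Prop :=
  (forall a b, is01 (A a b)) /\
  (forall a, #|[set b | A a b == 1%R]| <= 1)%N /\
  (forall b, #|[set a | A a b == 1%R]| <= 1)%N.

Definition lifting_perm_mx (p q : nat) (A : 'M[R]_(p, q)) : Prop :=
  (forall a b, is01 (A a b)) /\
  (forall a, #|[set b | A a b == 1%R]| = 1)%N /\
  (forall b, #|[set a | A a b == 1%R]| <= 1)%N.

Definition in_VV (n : nat) (msz : 'I_n -> nat) (m : nat)
    (V : 'M[R]_(\sum_(i < n) msz i, m)) : Prop :=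
  (forall i, lifting_perm_mx (submxcol V i)) /\
  (forall b, (0 < #|[set a | V a b == 1%R]|)%N).

Definition rowsum_diag (l : nat) (A : 'M[R]_l) : 'M[R]_l :=
  diag_mx (\row_a \sum_b A a b).

Definition rowsum_diag_invsqrt (l : nat) (A : 'M[R]_l) : 'M[R]_l :=
  diag_mx (\row_a (Num.sqrt (\sum_b A a b))^-1).

Definition nrm (l : nat) (A : 'M[R]_l) : 'M[R]_l :=
  rowsum_diag_invsqrt A *m A *m rowsum_diag_invsqrt A.

Definition lap_nrm (l : nat) (A : 'M[R]_l) : 'M[R]_l :=
  rowsum_diag_invsqrt A *m (rowsum_diag A - A) *m rowsum_diag_invsqrt A.

Definition frob (p q : nat) (A B : 'M[R]_(p, q)) : R := \tr (A^T *m B).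

Definition blocks_pp (n : nat) (msz : 'I_n -> nat)
    (P : 'M[R]_(\sum_(i < n) msz i)) : Prop :=
  forall i j, partial_perm_mx (submxblock P i j : 'M[R]_(msz i, msz j)).

Definition obj1 (n : nat) (msz : 'I_n -> nat) (m : nat)
    (Pt : 'M[R]_(\sum_(i < n) msz i)) (V : 'M[R]_(\sum_(i < n) msz i, m)) : R :=
  frob (nrm (V *m V^T)) (nrm Pt).

Definition feas1 (n : nat) (msz : 'I_n -> nat) (m : nat)
    (V : 'M[R]_(\sum_(i < n) msz i, m)) : Prop :=
  in_VV V /\ blocks_pp (V *m V^T).

Definition opt1 (n : nat) (msz : 'I_n -> nat) (m : nat)
    (Pt : 'M[R]_(\sum_(i < n) msz i)) (V : 'M[R]_(\sum_(i < n) msz i, m)) : Prop :=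
  feas1 V /\ forall V' : 'M[R]_(\sum_(i < n) msz i, m),
    feas1 V' -> obj1 Pt V' <= obj1 Pt V.

Definition U_of (l m : nat) (V : 'M[R]_(l, m)) : 'M[R]_(l, m) :=
  rowsum_diag_invsqrt (V *m V^T) *m V.

Definition in_UU (n : nat) (msz : 'I_n -> nat) (m : nat)
    (U : 'M[R]_(\sum_(i < n) msz i, m)) : Prop :=
  exists V : 'M[R]_(\sum_(i < n) msz i, m), in_VV V /\ U = U_of V.

Definition obj2 (n : nat) (msz : 'I_n -> nat) (m : nat)
    (Pt : 'M[R]_(\sum_(i < n) msz i)) (U : 'M[R]_(\sum_(i < n) msz i, m)) : R :=
  \tr (U^T *m lap_nrm Pt *m U).

Definition opt2 (n : nat) (msz : 'I_n -> nat) (m : nat)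
    (Pt : 'M[R]_(\sum_(i < n) msz i)) (U : 'M[R]_(\sum_(i < n) msz i, m)) : Prop :=
  in_UU U /\ forall U' : 'M[R]_(\sum_(i < n) msz i, m),
    in_UU U' -> obj2 Pt U <= obj2 Pt U'.

End Defs.

(* Main.v *)
Require Import Defs.
From HB Require Import structures.
From mathcomp Require Import all_boot all_order all_algebra.
From mathcomp Require Import ring.
Import Order.TTheory GRing.Theory Num.Theory.
Local Open Scope ring_scope.
Set Implicit Arguments. Unset Strict Implicit.

Lemma natb_eq1 (R : rcfType) (b : bool) : (((b : nat)%:R : R) == 1) = b.
Proof. by case: b => /=; rewrite ?eqxx // eq_sym oner_eq0. Qed.

Lemma is01_ge0 (R : rcfType) (x : R) : is01 x -> 0 <= x.
Proof. by case/orP => /eqP ->; rewrite ?ler01. Qed.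

Lemma sum_delta (R : rcfType) m (x : 'I_m) (F : 'I_m -> R) :
  \sum_(b < m) ((b == x) : nat)%:R * F b = F x.
Proof.
rewrite (bigD1 x) //= eqxx mul1r big1 ?addr0 // => b /negbTE ->.
by rewrite mul0r.
Qed.

Lemma subcolE (R : rcfType) n (msz : 'I_n -> nat) m
  (V : 'M[R]_(\sum_(i < n) msz i, m)) i k b :
  submxcol V i k b = V (tagnat.Rank i k) b.
Proof. by rewrite /submxcol /mxsub mxE. Qed.

Lemma subblockE (R : rcfType) n (msz : 'I_n -> nat)
  (P : 'M[R]_(\sum_(i < n) msz i)) i j k k' :
  (submxblock P i j : 'M[R]_(msz i, msz j)) k k' = P (tagnat.Rank i k) (tagnat.Rank j k').
Proof. by rewrite /submxblock /mxsub mxE. Qed.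

Lemma VV_struct (R : rcfType) n (msz : 'I_n -> nat) m
  (V : 'M[R]_(\sum_(i < n) msz i, m)) : in_VV V ->
  exists c : 'I_(\sum_(i < n) msz i) -> 'I_m,
  [/\ forall a b, V a b = ((b == c a) : nat)%:R,
      forall b, exists a, c a = b &
      forall i (k k' : 'I_(msz i)), c (tagnat.Rank i k) = c (tagnat.Rank i k') -> k = k'].
Proof.
move=> [Hl Hcol].
have H01 : forall a b, is01 (V a b).
  move=> a b; have [h _] := Hl (tagnat.sig1 a).
  by have := h (tagnat.sig2 a) b; rewrite subcolE tagnat.sig2K.
have : forall a, exists c, [set b | V a b == 1] = [set c].
  move=> a; apply/cards1P; have [_ [h _]] := Hl (tagnat.sig1 a).
  have := h (tagnat.sig2 a).
  under eq_finset => b do rewrite subcolE tagnat.sig2K.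
  by move=> ->.
move=> /fin_all_exists [c Hc].
have HV : forall a b, V a b = ((b == c a) : nat)%:R.
  move=> a b; have /setP /(_ b) := Hc a; rewrite !inE => e.
  case: (b == c a) e => /= e.
    by apply/eqP; rewrite e.
  by case/orP: (H01 a b) e => /eqP -> //; rewrite eqxx.
exists c; split => //.
  move=> b; have := Hcol b; rewrite card_gt0 => /set0Pn [a].
  by rewrite inE HV natb_eq1 => /eqP ->; exists a.
move=> i k k' e; have [_ [_ h]] := Hl i.
have /card_le1_eqP := h (c (tagnat.Rank i k)); apply.
  by rewrite inE subcolE HV e eqxx.
by rewrite inE subcolE HV ?e eqxx.
Qed.

Lemma VVt_entry (R : rcfType) l m (V : 'M[R]_(l, m)) (c : 'I_l -> 'I_m)
  (HV : forall a b, V a b = ((b == c a) : nat)%:R) a a' :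
  (V *m V^T) a a' = ((c a == c a') : nat)%:R.
Proof.
rewrite mxE; under eq_bigr => b _ do rewrite mxE !HV.
by rewrite sum_delta.
Qed.

Lemma D_eq (R : rcfType) l m (V : 'M[R]_(l, m)) (c : 'I_l -> 'I_m)
  (HV : forall a b, V a b = ((b == c a) : nat)%:R) :
  rowsum_diag_invsqrt (V *m V^T) =
  diag_mx (\row_a (Num.sqrt (\sum_a' ((c a' == c a) : nat)%:R))^-1).
Proof.
congr diag_mx; apply/rowP => a; rewrite !mxE.
by congr (_^-1); congr Num.sqrt; apply: eq_bigr => a' _; rewrite (VVt_entry HV) eq_sym.
Qed.

Lemma UtU (R : rcfType) l m (V : 'M[R]_(l, m)) (c : 'I_l -> 'I_m)
  (HV : forall a b, V a b = ((b == c a) : nat)%:R)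
  (Hs : forall b, exists a, c a = b) :
  (U_of V)^T *m U_of V = 1%:M.
Proof.
apply/matrixP => b b'; rewrite /U_of (D_eq HV) mul_diag_mx !mxE.
under eq_bigr => a _ do rewrite !mxE !HV.
pose N b := \sum_a' ((c a' == b) : nat)%:R : R.
under eq_bigr => a _.
  have -> : forall x y z : R, x^-1 * y * (x^-1 * z) = y * z * (x ^+ 2)^-1.
    by move=> x y z; rewrite -exprVn expr2; ring.
  rewrite sqr_sqrtr; last by apply: sumr_ge0 => a' _; apply: ler0n.
  have -> : ((b == c a) : nat)%:R * ((b' == c a) : nat)%:R * 
      (\sum_a' ((c a' == c a) : nat)%:R)^-1 =
      ((b == b') : nat)%:R * (((c a == b) : nat)%:R / N b) :> R.
    case: (eqVneq (c a) b) => [<-|ne].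
      by rewrite [b' == c a]eq_sym /N /=; ring.
    by rewrite /=; ring.
  over.
rewrite -mulr_sumr -mulr_suml divff ?mulr1 //.
have [a0 e] := Hs b.
rewrite /N -natr_sum pnatr_eq0 (bigD1 a0) //= e eqxx.
by rewrite add1n.
Qed.

Lemma obj1E (R : rcfType) l m (Pt : 'M[R]_l) (V : 'M[R]_(l, m)) :
  frob (nrm (V *m V^T)) (nrm Pt) = \tr ((U_of V)^T *m nrm Pt *m U_of V).
Proof.
rewrite /frob {1}/nrm /U_of.
set D := rowsum_diag_invsqrt (V *m V^T); set X := nrm Pt.
have hD : D^T = D by rewrite /D /rowsum_diag_invsqrt tr_diag_mx.
rewrite !trmx_mul trmxK hD [RHS]mxtrace_mulC.
by rewrite /X /nrm !mulmxA.
Qed.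

Lemma lapE (R : rcfType) l (Pt : 'M[R]_l)
  (Pt01 : forall a b, is01 (Pt a b)) (Pd : forall a, Pt a a = 1) :
  lap_nrm Pt = 1%:M - nrm Pt.
Proof.
rewrite /lap_nrm /nrm mulmxBr mulmxBl; congr (_ - _).
rewrite /rowsum_diag_invsqrt /rowsum_diag !mulmx_diag -diag_const_mx.
congr diag_mx; apply/rowP => a; rewrite !mxE.
set s := \sum_b Pt a b.
have s1 : 1 <= s.
  rewrite /s (bigD1 a) //= Pd lerDl; apply: sumr_ge0 => b _; exact: is01_ge0.
have s0 : 0 < s by apply: lt_le_trans s1; exact: ltr01.
have hs : Num.sqrt s != 0 by rewrite gt_eqF // sqrtr_gt0.
rewrite -{2}(sqr_sqrtr (ltW s0)) expr2.
by rewrite mulrA mulVf // mul1r mulfV.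
Qed.

Lemma blocksE (R : rcfType) n (msz : 'I_n -> nat) m
  (V : 'M[R]_(\sum_(i < n) msz i, m)) : in_VV V -> blocks_pp (V *m V^T).
Proof.
move=> /VV_struct [c [HV _ Hinj]] i j; split; [|split].
- move=> k k'; rewrite subblockE (VVt_entry HV).
  by case: (_ == _); rewrite /is01 eqxx ?orbT.
- move=> k; apply/card_le1_eqP => x y.
  rewrite !inE !subblockE !(VVt_entry HV) !natb_eq1 => /eqP ex /eqP ey.
  by apply: (Hinj j); rewrite -ey; exact: ex.
- move=> k'; apply/card_le1_eqP => x y.
  rewrite !inE !subblockE !(VVt_entry HV) !natb_eq1 => /eqP ex /eqP ey.
  by apply: (Hinj i); rewrite ey ex.
Qed.

Theorem proposition2 (R : rcfType) (n : nat) (msz : 'I_n -> nat) (m : nat)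
    (Pt : 'M[R]_(\sum_(i < n) msz i))
    (Pt01 : forall a b, is01 (Pt a b))
    (Pt_diag : forall i, (submxblock Pt i i : 'M[R]_(msz i, msz i)) = 1%:M) :
  (forall V : 'M[R]_(\sum_(i < n) msz i, m),
      in_VV V -> (opt1 Pt V <-> opt2 Pt (U_of V))) /\
  (forall U : 'M[R]_(\sum_(i < n) msz i, m), in_UU U -> U^T *m U = 1%:M).
Proof.
have Pd : forall a, Pt a a = 1.
  move=> a; have := congr1 (fun M : 'M[R]_(msz (tagnat.sig1 a)) =>
     M (tagnat.sig2 a) (tagnat.sig2 a)) (Pt_diag (tagnat.sig1 a)).
  by rewrite /= subblockE tagnat.sig2K mxE eqxx mulr1n.
have UtU' : forall V : 'M[R]_(\sum_(i < n) msz i, m), in_VV V ->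
    (U_of V)^T *m U_of V = 1%:M.
  by move=> V /VV_struct [c [HV Hs _]]; exact: UtU HV Hs.
have key : forall V : 'M[R]_(\sum_(i < n) msz i, m), in_VV V ->
    obj2 Pt (U_of V) = m%:R - obj1 Pt V.
  move=> V HV; rewrite /obj2 /obj1 obj1E (lapE Pt01 Pd) mulmxBr mulmxBl mulmx1.
  by rewrite UtU' // linearB /= mxtrace1.
have feas : forall V : 'M[R]_(\sum_(i < n) msz i, m), in_VV V -> feas1 V.
  by move=> V HV; split => //; exact: blocksE.
split; last by move=> U [V [HV ->]]; exact: UtU'.
move=> V HVV; split.
- case=> [F H]; split; first by exists V.
  move=> U' [V' [HV' ->]]; rewrite !key //. rewrite lerD2l lerN2.
  by apply: H; exact: feas.
- case=> [_ H]; split; first exact: feas.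
  move=> V' F'.
  have := H (U_of V') (ex_intro _ V' (conj F'.1 erefl)).
  by rewrite (key V HVV) (key V' F'.1) lerD2l lerN2.
Qed.
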